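(* For a real number $u \geqslant 0$ and an integer $h \geqslant 2$, let $R_2(h,u)$ denote the number of pairs of integers $(m,n) \in (u,u+h]^2$ such that $mn$ is a perfect square. Then \[ R_2(h,u) \ll h \log h, \] where the implied constant is absolute.
   Context: The notation $X \ll Y$ means $|X| \leqslant cY$ for some absolute constant $c>0$. *)

(* Defs.v *)
From mathcomp Require Import all_boot all_order all_algebra.
From mathcomp Require Import all_classical all_reals all_analysis.
Set Implicit Arguments. Unset Strict Implicit. Unset Printing Implicit Defensive.
Import Order.TTheory GRing.Theory Num.Theory.
Local Open Scope ring_scope.

Definition is_square (k : nat) : bool :=
  [exists j : 'I_k.+1, ((j : nat) * j == k)%N].

(* R_2(h,u): number of pairs of integers (m,n) in (u, u+h]^2 with m*n a
   perfect square.  Since u >= 0 such integers are positive naturals, and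
   every one of them is <= Num.trunc (u + h), so the range 0 .. trunc(u+h)
   contains all of them. *)
Definition R2 (R : realType) (h : nat) (u : R) : nat :=
  let M := (Num.trunc (u + h%:R)).+1 in
  #|[set p : 'I_M * 'I_M |
      [&& u < (p.1 : nat)%:R, (p.1 : nat)%:R <= u + h%:R,
          u < (p.2 : nat)%:R, (p.2 : nat)%:R <= u + h%:R &
          is_square ((p.1 : nat) * (p.2 : nat))%N]]|.

(* Main.v *)
Require Import Defs.
From mathcomp Require Import all_boot all_order all_algebra.
From mathcomp Require Import all_classical all_reals all_analysis.
From mathcomp Require Import zify ring lra.
Import Order.TTheory GRing.Theory Num.Theory.
Set Implicit Arguments. Unset Strict Implicit. Unset Printing Implicit Defensive.
Local Open Scope ring_scope.

Lemma card_spread M (A : {set 'I_M}) L :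
  (forall i j, i \in A -> j \in A -> (j <= i + L)%N) -> (#|A| <= L.+1)%N.
Proof.
move=> H.
case: (set_0Vmem A) => [->|[a aA]]; first by rewrite cards0.
case: (arg_minnP (fun i : 'I_M => nat_of_ord i) aA) => i0 i0A i0min.
rewrite -[L.+1]card_ord.
apply: (@leq_card_in _ _ (fun j : 'I_M => (inord (j - i0) : 'I_L.+1))).
move=> x y xA yA /(congr1 val) /=.
have hx := H _ _ i0A xA; have hy := H _ _ i0A yA.
have hx' := i0min _ xA; have hy' := i0min _ yA.
rewrite !inordK; try lia.
move=> e; apply: ord_inj; lia.
Qed.

Section NT.
Local Open Scope nat_scope.
Lemma sq_decomp (m n s : nat) : (0 < m)%N -> (0 < n)%N -> (m * n = s * s)%N ->
  exists k q p, m = (k * (q * q))%N /\ n = (k * (p * p))%N.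
Proof.
move=> m0 n0 E.
set g := gcdn m s.
have g0 : 0 < g by rewrite gcdn_gt0 m0.
have Hm : m = (m %/ g) * g by rewrite divnK // dvdn_gcdl.
have Hs : s = (s %/ g) * g by rewrite divnK // dvdn_gcdr.
set q := m %/ g in Hm *; set p := s %/ g in Hs *.
have cop : coprime q p.
  have : g = gcdn q p * g by rewrite muln_gcdl -Hm -Hs.
  by move/eqP; rewrite -{1}(mul1n g) eqn_pmul2r // eq_sym.
have E2 : q * n = g * (p * p).
  apply/eqP; rewrite -(eqn_pmul2r g0); apply/eqP.
  rewrite mulnAC -Hm E {1}Hs {1}Hs; ring.
have : q %| g * (p * p) by rewrite -E2 dvdn_mulr.
rewrite Gauss_dvdl; last by rewrite coprimeMr cop.
case/dvdnP=> k Hg.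
have q0 : 0 < q by move: m0; rewrite Hm; case: (q).
exists k, q, p; split; first by rewrite Hm Hg; ring.
apply/eqP; rewrite -(eqn_pmul2l q0) E2 Hg; apply/eqP; ring.
Qed.
End NT.


Definition In (R : realType) (u : R) (h x : nat) : bool :=
  (u < x%:R) && (x%:R <= u + h%:R).

Section S.
Variables (R : realType) (u : R) (h M : nat).
Hypothesis hu : 0 <= u.

Lemma In_pos x : In u h x -> (0 < x)%N.
Proof.
case/andP=> h1 _; rewrite lt0n; apply/eqP => e; move: h1; rewrite e.
by move=> h1; have := lt_le_trans h1 hu; rewrite ltxx.
Qed.

Lemma In_close x y : In u h x -> In u h y -> (y < x + h)%N.
Proof.
case/andP=> h1 _ /andP[_ h2]; rewrite -(ltr_nat R) natrD.
by apply: (le_lt_trans h2); rewrite ltrD2r.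
Qed.

Definition Ak (k : nat) : {set 'I_M} := [set a : 'I_M | In u h (k * (a * a))].
Definition Pk (k : nat) : {set 'I_M * 'I_M} :=
  [set x | [&& x.1 \in Ak k, x.2 \in Ak k & x.1 != x.2]].

Lemma Pk_bound k : (0 < #|Pk k|)%N ->
  [&& (0 < k)%N, (k < h)%N & (k * #|Pk k| <= 4 * h)%N].
Proof.
case/card_gt0P => [[q p]]; rewrite inE /= => /and3P[qA pA qp].
set N := #|Ak k|.
have N2 : (2 <= N)%N.
  have <- : #|[set q; p]| = 2%N by rewrite cards2 qp.
  by apply: subset_leq_card; rewrite finset.subUset !finset.sub1set qA pA.
have k0 : (0 < k)%N.
  by move: qA; rewrite inE => /In_pos; rewrite muln_gt0 => /andP[].
have close : forall i j : 'I_M, i \in Ak k -> j \in Ak k ->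
    (k * (j * j) < k * (i * i) + h)%N.
  by move=> i j; rewrite !inE; exact: In_close.
have KN : (k * ((N - 1) * (N - 1)) < h)%N.
  rewrite ltnNge; apply/negP => hK.
  have : (N <= (N - 2).+1)%N.
    apply: card_spread => i j iA jA.
    have c := close _ _ iA jA.
    case: (leqP j i) => ji; first by lia.
    move: c ji; generalize (nat_of_ord i) (nat_of_ord j) => a b c ab.
    have [d e] : exists d, b = (a + d)%N by exists (b - a)%N; lia.
    subst b.
    have hd : (k * (d * d) < h)%N by nia.
    have hdd : (d * d < (N - 1) * (N - 1))%N.
      by rewrite -(ltn_pmul2l k0); apply: (leq_trans hd).
    have : (d < N - 1)%N.
      rewrite ltnNge; apply/negP => hd'.
      by have := leq_mul hd' hd'; lia.
    lia.
  lia.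
have PN : (#|Pk k| <= N * N)%N.
  rewrite -cardsX; apply: subset_leq_card; apply/fintype.subsetP => [[a b]].
  by rewrite !inE /= => /and3P[-> -> _].
have h1 : (1 <= (N - 1) * (N - 1))%N by rewrite muln_gt0; lia.
apply/and3P; split => //.
  by apply: leq_ltn_trans KN; rewrite -{1}[k]muln1 leq_mul2l h1 orbT.
have h2 : (N * N <= 4 * ((N - 1) * (N - 1)))%N by nia.
apply: (leq_trans (leq_mul (leqnn k) PN)).
apply: (leq_trans (leq_mul (leqnn k) h2)).
rewrite mulnCA leq_mul2l; apply/orP; right; exact: ltnW.
Qed.

End S.

Lemma card_bigcup_le (T : finType) n (F : 'I_n -> {set T}) :
  (#|\bigcup_(i < n) F i| <= \sum_(i < n) #|F i|)%N.
Proof.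
elim/big_rec2: _ => [|i x Y _ IH]; first by rewrite cards0.
by rewrite (leq_trans (leq_card_setU _ _)) // leq_add2l.
Qed.

Lemma R2_le (R : realType) (u : R) (h : nat) (M' : nat) : 0 <= u -> (1 <= h)%N ->
  leq #|[set p : 'I_M'.+1 * 'I_M'.+1 |
      [&& u < (p.1 : nat)%:R, (p.1 : nat)%:R <= u + h%:R,
          u < (p.2 : nat)%:R, (p.2 : nat)%:R <= u + h%:R &
          is_square ((p.1 : nat) * (p.2 : nat))%N]]|
   (h + \sum_(k < M'.+1) #|Pk u h M'.+1 k|)%N.
Proof.
move=> hu h1.
set M := M'.+1.
set S := [set p : 'I_M * 'I_M | _].
set A1 := [set i : 'I_M | In u h i].
set D := [set (i, i) | i in A1].
set U := \bigcup_(k < M) [set ((inord (k * (x.1 * x.1)) : 'I_M), (inord (k * (x.2 * x.2)) : 'I_M)) | x : 'I_M * 'I_M in Pk u h M k].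
have sub : S \subset D :|: U.
  apply/fintype.subsetP => [[m n]]; rewrite inE /= => /and5P[i1 i2 i3 i4 sq].
  have Im : In u h m by apply/andP.
  have In' : In u h n by apply/andP.
  case: (eqVneq m n) => [<-|mn].
    by rewrite inE; apply/orP; left; apply/finset.imsetP; exists m => //; rewrite inE.
  rewrite inE; apply/orP; right.
  move: sq => /existsP [j /eqP hj].
  have [k [q [p [em en]]]] := sq_decomp (In_pos hu Im) (In_pos hu In') (esym hj).
  have m0 := In_pos hu Im; have n0 := In_pos hu In'.
  have mM : (m < M'.+1)%N := ltn_ord m.
  have nM : (n < M'.+1)%N := ltn_ord n.
  have := m0; rewrite em muln_gt0 => /andP[k0 qq0].
  have := n0; rewrite en muln_gt0 => /andP[_ pp0].
  have kM : (k < M'.+1)%N by apply: leq_ltn_trans mM; rewrite em leq_pmulr.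
  have qM : (q < M'.+1)%N.
    apply: leq_ltn_trans mM; rewrite em; apply: (leq_trans _ (leq_pmull _ k0)).
    by apply: leq_pmulr; rewrite muln_gt0 in qq0; case/andP: qq0.
  have pM : (p < M'.+1)%N.
    apply: leq_ltn_trans nM; rewrite en; apply: (leq_trans _ (leq_pmull _ k0)).
    by apply: leq_pmulr; rewrite muln_gt0 in pp0; case/andP: pp0.
  apply/finset.bigcupP; exists (Ordinal kM) => //.
  apply/finset.imsetP; exists (Ordinal qM, Ordinal pM).
    rewrite !inE /= -em -en Im In' /=.
    apply: contra_neq mn => -[e]; apply: ord_inj; by rewrite em en e.
  by congr (_, _); apply: ord_inj; rewrite inordK /= -?em -?en.
have cA : (#|A1| <= h)%N.
  rewrite -(prednK h1); apply: card_spread => i j; rewrite !inE => iA jA.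
  have := In_close iA jA; lia.
have cU : (#|U| <= \sum_(k < M) #|Pk u h M k|)%N.
  apply: (leq_trans (card_bigcup_le _)); apply: leq_sum => k _.
  exact: leq_imset_card.
apply: (leq_trans (subset_leq_card sub)).
apply: (leq_trans (leq_card_setU _ _)).
apply: leq_add => //.
by apply: (leq_trans (leq_imset_card _ _)).
Qed.

Lemma harm (R : realType) n :
  \sum_(i < n.+1) ((i.+1)%:R : R)^-1 <= 1 + ln (n.+1)%:R.
Proof.
elim: n => [|n IH].
  by rewrite big_ord1 ln1 addr0 invr1.
rewrite big_ord_recr /=.
have key : ln (n.+1%:R : R) + (n.+2%:R)^-1 <= ln (n.+2%:R).
  have h1 : ln ((n.+1%:R : R) / n.+2%:R) <= - (n.+2%:R)^-1.
    have e : (n.+1%:R : R) / n.+2%:R = 1 + (- (n.+2%:R)^-1).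
      rewrite -[n.+2]addn1 natrD; field.
      by apply/eqP => e; have := ler0n R n; lra.
    rewrite e; apply: le_ln1Dx.
    rewrite ltrNl opprK invf_lt1 ?ltr1n // ltr0n //.
  rewrite ln_div ?posrE ?ltr0n // in h1.
  set a := (n.+2%:R^-1 : R) in h1 *; set b := ln (n.+1%:R : R) in h1 *; set c := ln (n.+2%:R : R) in h1 *. lra.
set a := (n.+2%:R^-1 : R) in key *; set b := ln (n.+1%:R : R) in IH key *; set c := ln (n.+2%:R : R) in key *. set d := (\sum_(i < n.+1) _) in IH *. lra.
Qed.

Lemma ln2_ge (R : realType) : 1 / 2 <= ln (2 : R).
Proof.
have h : ln (1 + (- (1/2)) : R) <= - (1/2) by apply: le_ln1Dx; lra.
have e : (1 + (- (1/2)) : R) = 2^-1 by field.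
rewrite e lnV ?posrE // in h; lra.
Qed.

Lemma sum_supp (R : realType) (g : nat -> R) M N :
  (forall k, 0 <= g k) -> (forall k, (N <= k)%N -> g k = 0) ->
  \sum_(k < M) g k <= \sum_(k < N) g k.
Proof.
move=> g0 gN.
rewrite -!(big_mkord xpredT).
case: (leqP M N) => hMN.
  rewrite (big_cat_nat (leq0n M) hMN) /= lerDl.
  by apply: sumr_ge0 => i _.
rewrite (big_cat_nat (leq0n N) (ltnW hMN)) /= [X in _ + X <= _]big1_seq ?addr0 //.
move=> i /andP[_]; rewrite mem_index_iota => /andP[hi _]; exact: gN.
Qed.

Theorem lemma2p1 (R : realType) :
  exists c : R, 0 < c /\
    forall (u : R) (h : nat), 0 <= u -> (2 <= h)%N ->
      ((R2 h u)%:R : R) <= c * h%:R * ln (h%:R : R).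
Proof.
exists 14; split => //.
move=> u h hu; case: h => [|[|n]] // _.
have hn := R2_le (Num.trunc (u + (n.+2)%:R)) hu (isT : (1 <= n.+2)%N).
rewrite /R2 /=.
set M := (Num.trunc (u + (n.+2)%:R)).+1 in hn *.
move: hn; set X := #|_| => hn.
have hX : (X%:R : R) <= (n.+2)%:R + \sum_(k < M) (#|Pk u n.+2 M k|%:R : R).
  by rewrite -natr_sum -natrD ler_nat.
pose f (k : nat) : R := if (0 < k < n.+2)%N then 4 * (n.+2)%:R / k%:R else 0.
have f0 : forall k, 0 <= f k.
  move=> k; rewrite /f; case: ifP => // _.
have h1 : \sum_(k < M) (#|Pk u n.+2 M k|%:R : R) <= \sum_(k < M) f k.
  apply: ler_sum => k _.
  case: (posnP #|Pk u n.+2 M k|) => [->|hp]; first by rewrite f0.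
  have /and3P[k0 kh kb] := Pk_bound hu hp.
  rewrite /f k0 kh /= ler_pdivlMr ?ltr0n // -natrM mulrC.
  by rewrite -natrM ler_nat.
have h2 : \sum_(k < M) f k <= \sum_(k < n.+2) f k.
  apply: sum_supp => // k hk; rewrite /f.
  by case: ifP => // /andP[_]; rewrite ltnNge hk.
have h3 : \sum_(k < n.+2) f k = 4 * (n.+2)%:R * \sum_(i < n.+1) ((i.+1)%:R : R)^-1.
  rewrite big_ord_recl /f /= add0r mulr_sumr; apply: eq_bigr => i _.
  by rewrite /bump /= add1n ltnS ltn_ord.
have h4 := harm R n.
have h5 : ln ((n.+1)%:R : R) <= ln ((n.+2)%:R : R).
  by rewrite ler_ln ?posrE ?ltr0n // ler_nat.
have h6 : ln (2 : R) <= ln ((n.+2)%:R : R).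
  by rewrite ler_ln ?posrE ?ltr0n // ler_nat.
have h7 := ln2_ge R.
have H2 : (2 : R) <= (n.+2)%:R by rewrite ler_nat.
set H := ((n.+2)%:R : R) in hX h1 h2 h3 h5 h6 H2 *.
set L := ln H in h5 h6 *.
set L1 := ln ((n.+1)%:R : R) in h4 h5.
set Sh := \sum_(i < n.+1) _ in h3 h4.
set S0 := \sum_(k < M) _ in hX h1.
set S1 := \sum_(k < M) f k in h1 h2.
set S2 := \sum_(k < n.+2) f k in h2 h3.
have e1 : 4 * H * Sh <= 4 * H * (1 + L1).
  by rewrite ler_pM2l //; lra.
have e2 : 4 * H * L1 <= 4 * H * L by rewrite ler_pM2l //; lra.
have e3 : H <= 2 * H * L.
  have : 0 <= H * (2 * L - 1) by apply: mulr_ge0; lra.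
  lra.
nra.
Qed.
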